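(* Let $X_n=(\mathbb{C}^n,\|\cdot\|)$ be a Banach lattice and $J\subset\mathbb{N}_0^n$ a finite index set. Then $\boldsymbol{\lambda}\big(\mathcal{P}_J(X_n)\big)\le\widehat{\boldsymbol{\lambda}}\big(\mathcal{P}_J(X_n)\big)$.
   Context: A Banach lattice $X_n=(\mathbb{C}^n,\|\cdot\|)$ is a norm with $\|z\|\le\|w\|$ whenever $|z_k|\le|w_k|$ for all $k$. $\mathcal{P}_J(X_n)$ is the space of polynomials $\sum_{\alpha\in J}c_\alpha z^\alpha$ with norm $\sup_{z\in B_{X_n}}|P(z)|$, $B_{X_n}$ the open unit ball. $\boldsymbol{\lambda}(E)$ is the projection constant: supremum over Banach spaces $Y$ and isometric embeddings $I:E\to Y$ of the infimum of norms of projections from $Y$ onto $I(E)$. $c_{X_n}(\alpha)=1/\sup_{z\in B_{X_n}}|z^\alpha|$ and $\widehat{\boldsymbol{\lambda}}(\mathcal{P}_J(X_n))=\sup_{z\in B_{X_n}}\sum_{\alpha\in J}c_{X_n}(\alpha)|z^\alpha|$. *)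

(* Defs.v *)
From HB Require Import structures.
From mathcomp Require Import all_boot all_order all_algebra.
From mathcomp Require Import all_classical all_reals all_analysis.
From mathcomp Require Import complex.
Set Implicit Arguments. Unset Strict Implicit. Unset Printing Implicit Defensive.
Import Order.TTheory GRing.Theory Num.Theory.
Import numFieldNormedType.Exports.
Local Open Scope classical_set_scope.
Local Open Scope ring_scope.

(* A Banach lattice X_n = (C^n, N): N is a norm on C^n (complete automatically,
   being finite dimensional) which is monotone: |z_k| <= |w_k| for all k
   implies N z <= N w. *)
Definition is_lattice_norm (R : realType) (n : nat) (N : 'rV[R[i]]_n -> R) :=
  [/\ (forall z, N z = 0 -> z = 0),
      (forall (a : R[i]) z, N (a *: z) = complex.Re `|a| * N z) :> Prop,
      (forall z w : 'rV[R[i]]_n, N (z + w) <= N z + N w),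
      (forall z, 0 <= N z) &
      (forall z w : 'rV[R[i]]_n, (forall k, `|z ord0 k| <= `|w ord0 k|) -> N z <= N w)].

Definition open_ball (R : realType) (n : nat) (N : 'rV[R[i]]_n -> R) :=
  [set z | N z < 1].

Definition monom (R : realType) (n : nat) (alpha : n.-tuple nat)
  (z : 'rV[R[i]]_n) : R[i] :=
  \prod_(k < n) z ord0 k ^+ tnth alpha k.

(* J is given as a duplicate-free list of multi-indices; the k-th index *)
Definition idx (n : nat) (J : seq (n.-tuple nat)) (k : nat) : n.-tuple nat :=
  nth [tuple of nseq n 0%N] J k.

(* P_J(X_n): polynomials sum_{alpha in J} c_alpha z^alpha, represented by
   their coefficient vectors c : 'rV_(size J) (c ord0 k = coefficient of
   z^(idx J k)). *)
Definition polyJ (R : realType) (n : nat) (J : seq (n.-tuple nat))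
  (c : 'rV[R[i]]_(size J)) (z : 'rV[R[i]]_n) : R[i] :=
  \sum_(k < size J) c ord0 k * monom (idx J k) z.
Arguments polyJ {R n} J c z.

Definition polyJ_norm (R : realType) (n : nat) (N : 'rV[R[i]]_n -> R)
  (J : seq (n.-tuple nat)) (c : 'rV[R[i]]_(size J)) : \bar R :=
  ereal_sup [set (complex.Re `|polyJ J c z|)%:E | z in open_ball N].
Arguments polyJ_norm {R n} N J c.

Definition cX (R : realType) (n : nat) (N : 'rV[R[i]]_n -> R)
  (alpha : n.-tuple nat) : R :=
  (fine (ereal_sup [set (complex.Re `|monom alpha z|)%:E | z in open_ball N]))^-1.

Definition lambda_hat (R : realType) (n : nat) (N : 'rV[R[i]]_n -> R)
  (J : seq (n.-tuple nat)) : \bar R :=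
  ereal_sup [set (\sum_(k < size J) cX N (idx J k) * complex.Re `|monom (idx J k) z|)%:E
            | z in open_ball N].

(* I : P_J(X_n) -> Y is a linear isometric embedding (norm on Y is
   K-valued with K = R[i]; it is real, we compare via %:C). *)
Definition isometric_embedding (R : realType) (n : nat)
  (N : 'rV[R[i]]_n -> R) (J : seq (n.-tuple nat))
  (Y : normedModType R[i]) (I : 'rV[R[i]]_(size J) -> Y) :=
  (forall (a : R[i]) c d, I (a *: c + d) = a *: I c + I d) /\
  (forall c, `|I c| = real_complex R (fine (polyJ_norm N J c))).
Arguments isometric_embedding {R n} N J {Y} I.

Definition is_projection_onto (R : realType) (Y : normedModType R[i])
  (E : Type) (I : E -> Y) (Q : Y -> Y) :=
  [/\ (forall (a : R[i]) y y', Q (a *: y + y') = a *: Q y + Q y'),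
      (forall y, exists e, Q y = I e) &
      (forall e, Q (I e) = I e)].

(* "lambda(E) <= L" unfolded: for every Banach space Y, every isometric
   embedding I : E -> Y and every M > L, the infimum of the norms of the
   projections of Y onto I(E) is < M, i.e. some projection has norm <= M. *)
Definition projection_constant_le (R : realType) (n : nat)
  (N : 'rV[R[i]]_n -> R) (J : seq (n.-tuple nat)) (L : \bar R) :=
  forall (Y : completeNormedModType R[i]) (I : 'rV[R[i]]_(size J) -> Y),
    isometric_embedding N J I ->
    forall M : R, (L < M%:E)%E ->
      exists Q : Y -> Y, is_projection_onto I Q /\
        forall y, `|Q y| <= real_complex R M * `|y|.

(* Main.v *)
Require Import Defs.
From HB Require Import structures.
From mathcomp Require Import all_boot all_order all_algebra all_fingroup all_solvable all_field.
From mathcomp Require Import all_classical all_reals all_analysis.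
From mathcomp Require Import complex.
From mathcomp Require Import ring lra.
Set Implicit Arguments. Unset Strict Implicit. Unset Printing Implicit Defensive.
Import Order.TTheory GRing.Theory Num.Theory.
Import numFieldNormedType.Exports.
Local Open Scope classical_set_scope.
Local Open Scope ring_scope.
Local Open Scope complex_scope.

Lemma prim_ex (R : realType) n : (n > 0)%N -> {z : R[i] | n.-primitive_root z}.
Proof.
pose p : {poly R[i]} := 'X^n - 1; have [r Dp] := closed_field_poly_normal p.
move=> n_gt0; apply/sigW; rewrite (monicP _) ?monicXnsubC // scale1r in Dp.
have rn1: all n.-unity_root r by apply/allP=> z; rewrite -root_prod_XsubC -Dp.
have sz_r: (n < (size r).+1)%N.
  by rewrite -(size_prod_XsubC r id) -Dp size_XnsubC.
have [|z] := hasP (has_prim_root n_gt0 rn1 _ sz_r); last by exists z.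
by rewrite -separable_prod_XsubC -Dp separable_Xn_sub_1 // pnatr_eq0 -lt0n.
Qed.

Section HahnBanach.
Variables (R : realType) (Y : normedModType R[i]).
Local Notation C := R[i].

Definition nC (x : C) : R := complex.Re `|x|.
Definition nY (y : Y) : R := complex.Re `|y|.

Lemma ge0_RC (x : C) : 0 <= x -> x = (complex.Re x)%:C.
Proof. by case: x => a b; rewrite lecE /= => /andP[/eqP -> _]. Qed.

Lemma normY y : `|y| = (nY y)%:C.
Proof. exact: ge0_RC. Qed.

Lemma normCR (x : C) : `|x| = (nC x)%:C.
Proof. exact: ge0_RC. Qed.

Lemma nY_ge0 y : 0 <= nY y.
Proof. by rewrite -ler0c -normY. Qed.

Lemma nC_ge0 x : 0 <= nC x.
Proof. by rewrite -ler0c -normCR. Qed.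

Lemma nYD x y : nY (x + y) <= nY x + nY y.
Proof. by rewrite -lecR rmorphD /= -!normY ler_normD. Qed.

Lemma nYZ a y : nY (a *: y) = nC a * nY y.
Proof. by apply: complexI; rewrite -normY normrZ rmorphM /= -normY -normCR. Qed.

Lemma nCR (t : R) : nC t%:C = `|t|.
Proof. by apply: complexI; rewrite -normCR normc_def /= expr0n /= addr0 sqrtr_sqr. Qed.

Lemma nY0 : nY 0 = 0.
Proof. by apply: complexI; rewrite -normY normr0. Qed.

Lemma ReMC (t : R) (z : C) : complex.Re (t%:C * z) = t * complex.Re z.
Proof. by case: z => a b /=; rewrite mul0r subr0. Qed.

Lemma ReD (x y : C) : complex.Re (x + y) = complex.Re x + complex.Re y.
Proof. by case: x; case: y. Qed.

Lemma Re_le_nC (x : C) : complex.Re x <= nC x.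
Proof.
Proof. by rewrite (le_trans (ler_norm _)) // -lecR -normCR; exact: normc_ge_Re. Qed.

Lemma nYR (t : R) y : nY (t%:C *: y) = `|t| * nY y.
Proof. by rewrite nYZ nCR. Qed.

Definition goodG (K : R) (G0 G : set (Y * R)) :=
  [/\ G0 `<=` G,
   (forall x a b, G (x, a) -> G (x, b) -> a = b),
   (forall x y a b t, G (x, a) -> G (y, b) -> G (x + t%:C *: y, a + t * b)) &
   (forall x a, G (x, a) -> a <= K * nY x)].

Lemma good0 K G0 G : goodG K G0 G -> forall x a, G (x, a) -> G (0, 0).
Proof.
case=> _ _ Gc _ x a Gx.
by have := Gc _ _ _ _ (-1) Gx Gx; rewrite rmorphN rmorph1 scaleN1r mulN1r [x - x]subrr subrr.
Qed.

Lemma goodS K G0 G : goodG K G0 G -> forall x a t, G (x, a) -> G (t%:C *: x, t * a).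
Proof.
move=> gG x a t Gx; have G00 := good0 gG Gx; case: gG => _ _ Gc _.
by have := Gc _ _ _ _ t G00 Gx; rewrite !add0r.
Qed.

Lemma realHB (K : R) (G0 : set (Y * R)) : 0 <= K -> goodG K G0 G0 -> G0 !=set0 ->
  exists g : Y -> R, [/\ (forall x y t, g (x + t%:C *: y) = g x + t * g y),
    (forall x a, G0 (x, a) -> g x = a) & (forall x, g x <= K * nY x)].
Proof.
move=> K0 gG0 [[x00 a00] G0z].
pose P := fun G => G = set0 \/ goodG K G0 G.
have [A [PA maxA]] : exists A, P A /\ forall B, A `<` B -> ~ P B.
  apply: Zorn_bigcup => F FP tot.
  case: (pselect (exists X, F X /\ X !=set0)) => [[X0 [FX0 nX0]]|none]; last first.
    left; apply/seteqP; split => // z [X FX Xz]; apply: none; exists X; split => //.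
    by exists z.
  right.
  have gF X : F X -> X !=set0 -> goodG K G0 X.
    move=> FX [z Xz]; case: (FP X FX) => // X0e; by rewrite X0e in Xz.
  have two X1 X2 u v : F X1 -> F X2 -> X1 u -> X2 v ->
      exists X, [/\ F X, goodG K G0 X, X u & X v].
    move=> FX1 FX2 X1u X2v; case: (tot X1 X2 FX1 FX2) => [s12|s21].
      by exists X2; split => //; [apply: gF => //; exists v|apply: s12].
    by exists X1; split => //; [apply: gF => //; exists u|apply: s21].
  split.
  - move=> z G0z'; exists X0 => //; by case: (gF X0 FX0 nX0) => + _ _ _; apply.
  - move=> x a b [X1 FX1 X1a] [X2 FX2 X2b].
    have [X [_ [_ Gf _ _] Xa Xb]] := two _ _ _ _ FX1 FX2 X1a X2b; exact: Gf Xa Xb.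
  - move=> x y a b t [X1 FX1 X1a] [X2 FX2 X2b].
    have [X [FX [_ _ Gc _] Xa Xb]] := two _ _ _ _ FX1 FX2 X1a X2b.
    by exists X => //; apply: Gc.
  - move=> x a [X FX Xa]; have [_ _ _] := gF X FX (ex_intro _ _ Xa); exact.
have gA : goodG K G0 A.
  case: PA => // A0; exfalso; apply: (maxA G0); last by right.
  rewrite A0; split => // /(_ _ G0z) //.
have tot : forall y, exists a, A (y, a).
  move=> y0; apply: contrapT => ny0.
  have [sG0A Af Ac Ad] := gA.
  have A00 : A (0, 0) := good0 gA (sG0A _ G0z).
  have key x a x' a' : A (x, a) -> A (x', a') ->
      a - K * nY (x - y0) <= K * nY (x' + y0) - a'.
    move=> Ax Ax'; have := Ac _ _ _ _ 1 Ax Ax'; rewrite rmorph1 scale1r mul1r => Axx.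
    have h1 := Ad _ _ Axx.
    have h2 : nY (x + x') <= nY (x - y0) + nY (x' + y0).
      by have := nYD (x - y0) (x' + y0); rewrite addrACA addNr addr0.
    have h3 := ler_wpM2l K0 h2; rewrite mulrDr in h3; lra.
  pose S := [set r | exists x a, A (x, a) /\ r = a - K * nY (x - y0)].
  have S0 : S !=set0 by exists (0 - K * nY (0 - y0)), 0, 0.
  have Sub x' a' : A (x', a') -> ubound S (K * nY (x' + y0) - a').
    by move=> Ax' r [x [a [Ax ->]]]; apply: key.
  pose c := sup S.
  have c_ge x a : A (x, a) -> a - K * nY (x - y0) <= c.
    move=> Ax; apply: sup_upper_bound; last by exists x, a.
    by split => //; exists (K * nY (0 + y0) - 0); apply: Sub A00.
  have c_le x a : A (x, a) -> c <= K * nY (x + y0) - a.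
    by move=> Ax; apply: ge_sup => //; apply: Sub.
  pose A' := [set z | exists x a t, A (x, a) /\ z = (x + t%:C *: y0, a + t * c)].
  have AA' : A `<=` A'.
    by move=> [x a] Ax; exists x, a, 0; rewrite rmorph0 scale0r addr0 mul0r addr0.
  apply: (maxA A'); first split => //.
    move=> /(_ (0 + 1%:C *: y0, 0 + 1 * c)) h; apply: ny0.
    exists (0 + 1 * c); rewrite -[y0 in (y0, _)]scale1r -[y0 in (y0, _)]add0r.
    by apply: h; exists 0, 0, 1.
  right; split.
  - by apply: subset_trans AA'.
  - move=> z u v [x [a [t [Ax [-> ->]]]]] [x' [a' [t' [Ax' [e1 ->]]]]].
    have [tt|tt] := eqVneq t t'.
      move: e1; rewrite tt => /addIr ex; rewrite ex in Ax.
      by rewrite (Af _ _ _ Ax Ax').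
    exfalso; apply: ny0.
    have e2 : (t - t')%:C *: y0 = x' - x.
      by rewrite rmorphB scalerBl; apply/eqP; rewrite subr_eq addrAC -e1 addrAC subrr add0r.
    have ye : y0 = ((t - t')^-1)%:C *: (x' - x).
      by rewrite -e2 scalerA -rmorphM mulVf ?scale1r // subr_eq0.
    have := Ac _ _ _ _ (-1) Ax' Ax; rewrite rmorphN rmorph1 scaleN1r => Ad'.
    have := goodS gA ((t - t')^-1) Ad'; rewrite -ye => h; eexists; exact: h.
  - move=> x1 x2 u1 u2 s [x [a [t [Ax [-> ->]]]]] [x' [a' [t' [Ax' [-> ->]]]]].
    exists (x + s%:C *: x'), (a + s * a'), (t + s * t'); split; first exact: Ac.
    congr pair.
      rewrite scalerDr scalerA -rmorphM rmorphD /= scalerDl.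
      by rewrite addrACA.
    by ring.
  - move=> z u [x [a [t [Ax [-> ->]]]]].
    have [t0|tn0] := ltP 0 t.
      have Ax1 := goodS gA (t^-1) Ax.
      have h := c_le _ _ Ax1.
      have e : x + t%:C *: y0 = t%:C *: (t^-1%:C *: x + y0).
        by rewrite scalerDr scalerA -rmorphM mulfV ?gt_eqF // scale1r.
      rewrite e nYR gtr0_norm //.
      set w := nY _ in h *.
      have h2 : t * c <= t * (K * w - t^-1 * a) := ler_wpM2l (ltW t0) h.
      have e2 : t * (K * w - t^-1 * a) = K * (t * w) - a.
        by field; rewrite (gt_eqF t0).
      lra.
    have [tz|tn] := eqVneq t 0.
      by rewrite tz rmorph0 scale0r addr0 mul0r addr0; apply: Ad.
    have t0 : t < 0 by rewrite lt_neqAle tn.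
    pose s := - t.
    have s0 : 0 < s by rewrite oppr_gt0.
    have Ax1 := goodS gA (s^-1) Ax.
    have h := c_ge _ _ Ax1.
    have e : x + t%:C *: y0 = s%:C *: (s^-1%:C *: x - y0).
      rewrite scalerBr scalerA -rmorphM mulfV ?gt_eqF // scale1r.
      by rewrite /s rmorphN scaleNr opprK.
    rewrite e nYR gtr0_norm //.
    set w := nY _ in h *.
    have h2 : s * (s^-1 * a - K * w) <= s * c := ler_wpM2l (ltW s0) h.
    have e2 : s * (s^-1 * a - K * w) = a - K * (s * w).
      by field; rewrite (gt_eqF s0).
    rewrite /s in h2 e2 *; lra.
have [g gP] : exists g : Y -> R, forall y, A (y, g y).
  by exists (fun y => projT1 (cid (tot y))) => y; exact: projT2 (cid (tot y)).
have [sG0A Af Ac Ad] := gA.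
exists g; split.
- by move=> x y t; apply: (Af _ _ _ (gP _)); apply: Ac.
- by move=> x a G0x; apply: (Af _ _ _ (gP _)); apply: sG0A.
- by move=> x; apply: Ad.
Qed.


Lemma ReiC (r s : R) : complex.Re (r%:C - 'i * s%:C) = r.
Proof. by rewrite /= mul0r mulr0 subr0 subr0. Qed.

Lemma complexHB (E : lmodType C) (I : E -> Y) (phi : E -> C) (K : R) : 0 <= K ->
  (forall a c d, I (a *: c + d) = a *: I c + I d) ->
  (forall a c d, phi (a *: c + d) = a * phi c + phi d) ->
  (forall e, `|phi e| <= (K * nY (I e))%:C) ->
  exists F : Y -> C, [/\ (forall a x y, F (a *: x + y) = a * F x + F y),
    (forall e, F (I e) = phi e) & (forall y, `|F y| <= (K * nY y)%:C)].
Proof.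
move=> K0 HI Hphi Hb.
have IB c d : I (c - d) = I c - I d.
  by have := HI (-1) d c; rewrite scaleN1r addrC => ->; rewrite scaleN1r addrC.
have phiB c d : phi (c - d) = phi c - phi d.
  by have := Hphi (-1) d c; rewrite scaleN1r addrC => ->; rewrite mulN1r addrC.
have I0 : I 0 = 0 by rewrite -(subrr (0:E)) IB subrr.
have phi0 : phi 0 = 0 by rewrite -(subrr (0:E)) phiB subrr.
pose G0 := [set z | exists e, z = (I e, complex.Re (phi e))].
have gG0 : goodG K G0 G0.
  split => //.
  - move=> x a b [e [-> ->]] [e' [e1 ->]].
    have := Hb (e - e'); rewrite IB e1 subrr nY0 mulr0 normr_le0 phiB subr_eq0.
    by move=> /eqP ->.
  - move=> x y a b t [e [-> ->]] [e' [-> ->]].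
    exists (t%:C *: e' + e); rewrite HI Hphi ReD ReMC; congr pair.
      by rewrite addrC.
    by rewrite addrC.
  - move=> x a [e [-> ->]]; apply: le_trans (Re_le_nC _) _.
    by rewrite -lecR -normCR.
have [g [gL gG0' gd]] := realHB K0 gG0 (ex_intro _ _ (ex_intro _ 0 erefl)).
have g0 : g 0 = 0.
  by have := gL 0 0 1; rewrite scaler0 addr0 mul1r; lra.
have gD x y : g (x + y) = g x + g y by have := gL x y 1; rewrite scale1r mul1r.
have gZ t y : g (t%:C *: y) = t * g y by have := gL 0 y t; rewrite add0r g0 add0r.
have gN y : g (- y) = - g y.
  by have := gZ (-1) y; rewrite rmorphN rmorph1 scaleN1r mulN1r.
pose F y := (g y)%:C - 'i * (g ('i *: y))%:C.
have FD x y : F (x + y) = F x + F y.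
  by rewrite /F scalerDr !gD !rmorphD mulrDr opprD addrACA.
have FZ t y : F (t%:C *: y) = t%:C * F y.
  rewrite /F; have -> : 'i *: (t%:C *: y) = t%:C *: ('i *: y) by rewrite !scalerA mulrC.
  by rewrite !gZ !rmorphM mulrBr mulrCA.
have Fi y : F ('i *: y) = 'i * F y.
  rewrite /F scalerA -expr2 sqr_i scaleN1r gN rmorphN mulrN opprK.
  by rewrite mulrBr mulrA -expr2 sqr_i mulN1r opprK addrC.
have FZc a x : F (a *: x) = a * F x.
  rewrite [a in LHS]complexE [a in RHS]complexE scalerDl FD FZ -scalerA Fi FZ.
  by rewrite mulrDl mulrA.
exists F; split.
- by move=> a x y; rewrite FD FZc.
- move=> e; rewrite /F (gG0' _ _ (ex_intro _ e erefl)).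
  have -> : 'i *: I e = I ('i *: e) by rewrite -[_ *: e]addr0 HI I0 addr0.
  rewrite (gG0' _ _ (ex_intro _ _ erefl)).
  have -> : phi ('i *: e) = 'i * phi e by rewrite -[_ *: e]addr0 Hphi phi0 addr0.
  rewrite [in RHS](complexE (phi e)); congr (_ + _).
  by case: (phi e) => a b /=; rewrite mul0r mul1r sub0r rmorphN mulrN opprK.
- move=> y; have [Fy0|Fy0] := eqVneq (F y) 0.
    by rewrite Fy0 normr0 ler0c mulr_ge0 // nY_ge0.
  pose w := `|F y| / F y.
  have nw : nC w = 1.
    apply: complexI; rewrite -normCR normf_div normr_id divff //.
    by rewrite normr_eq0.
  have Fw : F (w *: y) = `|F y| by rewrite FZc /w mulfVK.
  rewrite normCR lecR.
  have -> : nC (F y) = complex.Re (F (w *: y)) by rewrite Fw.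
  rewrite /F ReiC; apply: le_trans (gd _) _.
  by rewrite nYZ nw mul1r.
Qed.

End HahnBanach.


Section NC.
Variable R : realType.
Local Notation C := R[i].

Lemma nCM (x y : C) : nC (x * y) = nC x * nC y.
Proof. by apply: complexI; rewrite rmorphM -!normCR normrM. Qed.

Lemma nCX (x : C) k : nC (x ^+ k) = nC x ^+ k.
Proof. by apply: complexI; rewrite rmorphXn -!normCR normrX. Qed.

Lemma nC_prod I (r : seq I) (f : I -> C) : nC (\prod_(i <- r) f i) = \prod_(i <- r) nC (f i).
Proof.
apply: complexI; rewrite rmorph_prod -normCR normr_prod.
by apply: eq_bigr => i _; rewrite normCR.
Qed.

Lemma nC_sum I (r : seq I) (f : I -> C) : nC (\sum_(i <- r) f i) <= \sum_(i <- r) nC (f i).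
Proof.
rewrite -lecR rmorph_sum -normCR [X in _ <= X](eq_bigr (fun i => `|f i|)) ?ler_norm_sum //.
Qed.

Lemma nC0 : nC (0 : C) = 0.
Proof. by apply: complexI; rewrite -normCR normr0. Qed.

Lemma nCeq0 (x : C) : (nC x == 0) = (x == 0).
Proof.
apply/eqP/eqP => [h|->]; last exact: nC0.
by apply/eqP; rewrite -normr_eq0 normCR h.
Qed.

Lemma esup_props (T : Type) (A : set T) (f : T -> R) (b : R) (t0 : T) :
  A t0 -> (forall t, A t -> f t <= b) ->
  exists r, [/\ ereal_sup [set (f t)%:E | t in A] = r%:E,
    (forall t, A t -> f t <= r) & r <= b].
Proof.
move=> At0 hb.
have ub : (ereal_sup [set (f t)%:E | t in A] <= b%:E)%E.
  by apply: ge_ereal_sup => _ [t At <-]; rewrite lee_fin; apply: hb.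
have lb t : A t -> ((f t)%:E <= ereal_sup [set (f t)%:E | t in A])%E.
  by move=> At; apply: ereal_sup_ubound; exists t.
move: ub lb (lb _ At0); case: (ereal_sup _) => [r| |] // ub lb _.
exists r; split; [done| move=> t At; rewrite -lee_fin; exact: lb| by rewrite -lee_fin].
Qed.

End NC.


Section Main.
Variables (R : realType) (n : nat) (N : 'rV[R[i]]_n -> R) (J : seq (n.-tuple nat)).
Hypothesis HN : is_lattice_norm N.
Local Notation C := R[i].

Lemma N0 : N 0 = 0.
Proof.
have [_ NZ _ _ _] := HN; have := NZ 0 0; rewrite scale0r => ->.
by rewrite normr0 mul0r.
Qed.

Lemma NZR (a : C) (z : 'rV[C]_n) : N (a *: z) = nC a * N z.
Proof. by have [_ NZ _ _ _] := HN; rewrite NZ. Qed.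

Lemma Nmon (z w : 'rV[C]_n) : (forall k, nC (z ord0 k) <= nC (w ord0 k)) -> N z <= N w.
Proof. by have [_ _ _ _ Nm] := HN; move=> h; apply: Nm => k; rewrite !normCR lecR. Qed.

Lemma ball0 : open_ball N 0.
Proof. by rewrite /open_ball /= N0. Qed.

Lemma coord_bound : exists B : 'I_n -> R,
  (forall j, 0 <= B j) /\ forall z, N z < 1 -> forall j, nC (z ord0 j) <= B j.
Proof.
have [Nd _ _ Nge _] := HN.
pose e (j : 'I_n) : 'rV[C]_n := delta_mx ord0 j.
have epos j : 0 < N (e j).
  rewrite lt_neqAle Nge andbT; apply/eqP => /esym /Nd /rowP /(_ j).
  by rewrite !mxE !eqxx /= => /eqP; rewrite oner_eq0.
exists (fun j => (N (e j))^-1); split => [j|z zB j]; first by rewrite invr_ge0 ltW.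
have : N (z ord0 j *: e j) <= N z.
  apply: Nmon => k; rewrite !mxE /=.
  have [->|jk] := eqVneq k j; first by rewrite mulr1.
  by rewrite mulr0 nC0 nC_ge0.
rewrite NZR => h; rewrite -[_^-1]mul1r ler_pdivlMr //; exact: le_trans h (ltW zB).
Qed.


Lemma monom_bound : exists B : 'I_n -> R, (forall j, 0 <= B j) /\
  forall (al : n.-tuple nat) z, N z < 1 -> nC (monom al z) <= \prod_j B j ^+ tnth al j.
Proof.
have [B [B0 HB]] := coord_bound.
exists B; split => // al z zB.
rewrite /monom nC_prod; apply: ler_prod => j _.
rewrite nCX exprn_ge0 ?nC_ge0 //=.
apply: lerXn2r; rewrite ?nnegrE ?nC_ge0 ?B0 //; exact: HB.
Qed.

Definition pn c := fine (polyJ_norm N J c).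

Lemma pn_props c : polyJ_norm N J c = (pn c)%:E /\
  (forall z, N z < 1 -> nC (polyJ J c z) <= pn c).
Proof.
have [B [B0 HB]] := monom_bound.
have hb : forall z, open_ball N z -> nC (polyJ J c z) <=
    \sum_(k < size J) nC (c ord0 k) * \prod_j B j ^+ tnth (idx J k) j.
  move=> z zB; rewrite /polyJ; apply: le_trans (nC_sum _ _) _.
  apply: ler_sum => k _; rewrite nCM; apply: ler_wpM2l; first exact: nC_ge0. exact: HB.
have [r [e h1 h2]] := esup_props (f := fun z => nC (polyJ J c z)) ball0 hb.
have e' : polyJ_norm N J c = r%:E := e.
by rewrite /pn e' /=; split.
Qed.

Lemma pn_ge0 c : 0 <= pn c.
Proof. by have [_ h] := pn_props c; apply: le_trans (h 0 _); rewrite ?nC_ge0 ?N0. Qed.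

Lemma pn_le c b : (forall z, N z < 1 -> nC (polyJ J c z) <= b) -> pn c <= b.
Proof.
move=> hb; have [r [e _ rb]] := esup_props (f := fun z => nC (polyJ J c z)) ball0 hb.
have e' : polyJ_norm N J c = r%:E := e.
by rewrite /pn e'.
Qed.

Lemma msup_props (al : n.-tuple nat) : exists s, [/\
  ereal_sup [set (complex.Re `|monom al z|)%:E | z in open_ball N] = s%:E, 0 < s,
  (forall z, N z < 1 -> nC (monom al z) <= s) & cX N al = s^-1].
Proof.
have [B [B0 HB]] := monom_bound.
have [s [e h1 _]] := esup_props (f := fun z => nC (monom al z))
  (b := \prod_j B j ^+ tnth al j) ball0 (fun z zB => HB al z zB).
have e' : ereal_sup [set (complex.Re `|monom al z|)%:E | z in open_ball N] = s%:E := e.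
exists s; split => //; last by rewrite /cX e'.
have [_ _ _ Nge _] := HN.
pose t : R := (N (const_mx 1) + 1)^-1.
have t0 : 0 < t by rewrite invr_gt0; have := Nge (const_mx 1); lra.
have zB : N (const_mx t%:C) < 1.
  have -> : const_mx t%:C = t%:C *: (const_mx 1 : 'rV[C]_n) by rewrite scalemx_const mulr1.
  rewrite NZR nCR gtr0_norm // /t mulrC ltr_pdivrMr; last by have := Nge (const_mx 1); lra.
  by rewrite mul1r; lra.
apply: lt_le_trans (h1 _ zB).
rewrite /monom nC_prod; apply: prodr_gt0 => j _; rewrite mxE nCX nCR gtr0_norm //.
exact: exprn_gt0.
Qed.

Lemma cauchy (c : 'rV[C]_(size J)) (k : 'I_(size J)) (w : 'rV[C]_n) :
  uniq J -> N w < 1 -> nC (c ord0 k) * nC (monom (idx J k) w) <= pn c.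
Proof.
move=> uJ wB.
pose m := ((\max_(l < size J) \max_(j < n) tnth (idx J l) j)%N).+1.
have Hm (l : 'I_(size J)) (j : 'I_n) : (tnth (idx J l) j < m)%N.
  rewrite ltnS; apply: (leq_trans (leq_bigmax (F := fun j : 'I_n => tnth (idx J l) j) j)).
  exact: (leq_bigmax (F := fun l : 'I_(size J) => (\max_(j < n) tnth (idx J l) j)%N) l).
have m0 : (0 < m)%N by [].
have [z zP] := prim_ex R m0.
have zm : z ^+ m = 1 := prim_expr_order zP.
have z1 : `|z| = 1.
  by apply/eqP; rewrite -(pexpr_eq1 m0) ?normr_ge0 // -normrX zm normr1.
have z0 : z != 0 by rewrite -normr_eq0 z1 oner_eq0.
have nz1 : nC z = 1 by apply: complexI; rewrite -normCR z1.
set al := idx J k.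
pose wt (t : {ffun 'I_n -> 'I_m}) : 'rV[C]_n := \row_j (z ^+ t j * w ord0 j).
pose om (t : {ffun 'I_n -> 'I_m}) := \prod_j ((z ^+ t j) ^+ tnth al j)^-1.
have wtB t : N (wt t) < 1.
  apply: le_lt_trans wB; apply: Nmon => j; rewrite mxE nCM nCX nz1.
  by rewrite expr1n mul1r.
have om1 t : `|om t| = 1.
  by rewrite normr_prod; apply: big1 => j _; rewrite normfV !normrX z1 !expr1n invr1.
have inner (be : n.-tuple nat) (j : 'I_n) : (tnth be j < m)%N ->
    \sum_(i < m) (z ^+ i) ^+ tnth be j / (z ^+ i) ^+ tnth al j =
    if tnth be j == tnth al j then m%:R else 0.
  move=> bm; have am : (tnth al j < m)%N := Hm k j.
  case: eqP => [->|ne].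
    rewrite (eq_bigr (fun _ => 1)) ?sumr_const ?card_ord //.
    by move=> i _; rewrite divff // !expf_neq0.
  pose x := z ^+ tnth be j / z ^+ tnth al j.
  rewrite (eq_bigr (fun i : 'I_m => x ^+ i)); last first.
    by move=> i _; rewrite /x exprMn exprVn -!exprM (mulnC i) (mulnC i).
  have xm : x ^+ m = 1.
    by rewrite /x exprMn exprVn !(exprAC z _ m) zm !expr1n invr1 mulr1.
  have x1 : x != 1.
    apply/eqP => h; apply: ne.
    have : z ^+ tnth be j = z ^+ tnth al j.
      by rewrite -[LHS]mulr1 -(mulVf (expf_neq0 (tnth al j) z0)) mulrA -/x h mul1r.
    by move/eqP; rewrite (eq_prim_root_expr zP) !modn_small // => /eqP.
  have := subrX1 x m; rewrite xm subrr => /esym /eqP.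
  by rewrite mulf_eq0 subr_eq0 (negbTE x1) /= => /eqP.
have mwt t (be : n.-tuple nat) :
    monom be (wt t) = (\prod_j (z ^+ t j) ^+ tnth be j) * monom be w.
  by rewrite /monom -big_split /=; apply: eq_bigr => j _; rewrite mxE exprMn.
have gen (l : 'I_(size J)) : \sum_(t : {ffun 'I_n -> 'I_m}) om t * (c ord0 l * monom (idx J l) (wt t))
   = c ord0 l * monom (idx J l) w * \prod_(j < n) \sum_(i < m)
        (z ^+ i) ^+ tnth (idx J l) j / (z ^+ i) ^+ tnth al j.
  rewrite bigA_distr_bigA /= mulr_sumr; apply: eq_bigr => t _.
  rewrite mwt /om [in RHS]big_split /=; ring.
have prodv (l : 'I_(size J)) : \prod_(j < n) \sum_(i < m)
        (z ^+ i) ^+ tnth (idx J l) j / (z ^+ i) ^+ tnth al j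
     = if l == k then (m ^ n)%:R else 0.
  rewrite (eq_bigr (fun j => if tnth (idx J l) j == tnth al j then m%:R else 0)); last by move=> j _; rewrite inner ?Hm.
  case: eqP => [->|lk].
    rewrite (eq_bigr (fun _ => m%:R)) ?prodr_const ?card_ord ?natrX // => j _.
    by rewrite eqxx.
  have ne : idx J l != al.
    by rewrite /al /idx nth_uniq ?ltn_ord //; apply/eqP => /ord_inj.
  case: (boolP [exists j, tnth (idx J l) j != tnth al j]) => [/existsP [j hj]|/existsPn h].
    by rewrite (bigD1 j) //= (negbTE hj) mul0r.
  exfalso; apply/(negP ne)/eqP/eq_from_tnth => j; have := h j; rewrite negbK => /eqP.
  done.
have key : \sum_(t : {ffun 'I_n -> 'I_m}) om t * polyJ J c (wt t) =
    (m ^ n)%:R * (c ord0 k * monom al w).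
  rewrite /polyJ; under eq_bigr => t _ do rewrite mulr_sumr.
  rewrite exchange_big /= (bigD1 k) //=.
  rewrite [X in _ + X]big1 => [|l lk]; last by rewrite gen prodv (negbTE lk) mulr0.
  by rewrite addr0 gen prodv eqxx mulrC.
have : `|(m ^ n)%:R * (c ord0 k * monom al w)| <= ((m ^ n)%:R * pn c)%:C.
  rewrite -key; apply: le_trans (ler_norm_sum _ _ _) _.
  rewrite (eq_bigr (fun t => `|polyJ J c (wt t)|)); last first.
    by move=> t _; rewrite normrM om1 mul1r.
  apply: (@le_trans _ _ (\sum_(t : {ffun 'I_n -> 'I_m}) (pn c)%:C)).
    apply: ler_sum => t _; rewrite normCR lecR; exact: (pn_props c).2 _ (wtB t).
  by rewrite sumr_const card_ffun !card_ord rmorphM rmorph_nat mulr_natl.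
rewrite normrM normr_nat normCR -(rmorph_nat (real_complex R)) -rmorphM lecR.
by rewrite ler_pM2l ?ltr0n ?expn_gt0 ?m0 // nCM.
Qed.

Lemma coef_bound (c : 'rV[C]_(size J)) (k : 'I_(size J)) : uniq J -> nC (c ord0 k) <= cX N (idx J k) * pn c.
Proof.
move=> uJ; have [s [e s0 hs cXe]] := msup_props (idx J k).
rewrite cXe.
have [c0|c0] := eqVneq (nC (c ord0 k)) 0.
  by rewrite c0; apply: mulr_ge0; [rewrite invr_ge0; exact: ltW | exact: pn_ge0].
have cpos : 0 < nC (c ord0 k) by rewrite lt_neqAle eq_sym c0 nC_ge0.
have : s <= pn c / nC (c ord0 k).
  rewrite -lee_fin -e; apply: ge_ereal_sup => _ [z zB <-].
  rewrite lee_fin ler_pdivlMr // mulrC; exact: cauchy.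
rewrite ler_pdivlMr // => h.
by rewrite mulrC ler_pdivlMr // mulrC.
Qed.

End Main.



Theorem theorem2p18 (R : realType) (n : nat) (N : 'rV[R[i]]_n -> R)
  (J : seq (n.-tuple nat)) :
  is_lattice_norm N -> uniq J ->
  projection_constant_le N J (lambda_hat N J).
Proof.
move=> HN uJ Y I [HIl HIn] M LM.
have nYI c : nY (I c) = pn N c by rewrite /nY HIn.
have cX0 (k : 'I_(size J)) : 0 <= cX N (idx J k).
  by have [s [_ s0 _ ->]] := msup_props HN (idx J k); rewrite invr_ge0 ltW.
have HF : forall k : 'I_(size J), exists F : Y -> R[i],
    [/\ (forall a x y, F (a *: x + y) = a * F x + F y),
      (forall e, F (I e) = e ord0 k) &
      (forall y, `|F y| <= (cX N (idx J k) * nY y)%:C)].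
  move=> k; apply: (complexHB (E := 'rV[R[i]]_(size J)) (cX0 k) HIl).
  - by move=> a c d; rewrite !mxE.
  - by move=> e; rewrite normCR lecR nYI; exact: (coef_bound HN).
case: (choice HF) => Fs HFs.
exists (fun y => I (\row_k Fs k y)); split; [split|].
- move=> a y y'; rewrite -HIl; congr I; apply/rowP => k; rewrite !mxE.
  by have [Fl _ _] := HFs k; exact: Fl.
- by move=> y; exists (\row_k Fs k y).
- move=> e; congr I; apply/rowP => k; rewrite mxE.
  by have [_ Fe _] := HFs k; rewrite Fe.
- move=> y; rewrite HIn normY -rmorphM lecR.
  apply: (pn_le HN) => z zB.
  rewrite /polyJ; apply: le_trans (nC_sum _ _) _.
  apply: (@le_trans _ _ (nY y * \sum_(k < size J) cX N (idx J k) * complex.Re `|monom (idx J k) z|)).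
    rewrite mulr_sumr; apply: ler_sum => k _; rewrite mxE nCM.
    have [_ _ Fb] := HFs k; have := Fb y; rewrite normCR lecR => h.
    rewrite mulrA [nY y * _]mulrC; apply: ler_wpM2r; [exact: nC_ge0 | exact: h].
  rewrite mulrC; apply: ler_wpM2r; first exact: nY_ge0.
  have : ((\sum_(k < size J) cX N (idx J k) * complex.Re `|monom (idx J k) z|)%:E < M%:E)%E.
    by apply: le_lt_trans LM; apply: ereal_sup_ubound; exists z.
  by rewrite lte_fin => /ltW.
Qed.
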